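(* Let $\mathsf P$ be a network coding problem and $q$ a prime power. A rate-capacity tuple $(\lambda,\omega)$ is $0$-achievable subject to the $q$-linearity constraint if and only if \[(\lambda,\omega)\in\mathsf{CL}\big(\mathrm{proj}_{\mathsf P}[\bar\Upsilon^*_q(\mathsf P)\cap\mathcal C_I(\mathsf P)\cap\mathcal C_T(\mathsf P)\cap\mathcal C_D(\mathsf P)]\big).\] (The sources need not be colocated.)
   Context: A network is $\mathsf G=(\mathcal V,\mathcal E)$, $\mathcal V$ a finite set of nodes, $\mathcal E$ a finite set of hyperedges, each $e$ with tail $\mathrm{tail}(e)\in\mathcal V$ and head $\mathrm{head}(e)\subseteq\mathcal V$, without directed cycles (no nonempty sequence of links $f_1,\dots,f_k$ with $\mathrm{tail}(f_i)\in\mathrm{head}(f_{i-1})$ for $i\ge2$ and $\mathrm{tail}(f_1)\in\mathrm{head}(f_k)$). A connection constraint $\mathsf M=(\mathcal S,O,D)$: finite source index set $\mathcal S$, $O:\mathcal S\to2^{\mathcal V}$ (where source $s$ is available), $D:\mathcal S\to2^{\mathcal V}$ (sinks of $s$). $\mathsf P=(\mathsf G,\mathsf M)$. Sources are imaginary edges with $\mathrm{head}(s)=O(s)$; $\mathrm{in}(e)=\{f\in\mathcal S\cup\mathcal E:\mathrm{tail}(e)\in\mathrm{head}(f)\}$, $\mathrm{in}(u)=\{f\in\mathcal S\cup\mathcal E:u\in\mathrm{head}(f)\}$. A $q$-linear network code for $\mathsf P$ is a family of random variables $\{Y_f:f\in\mathcal S\cup\mathcal E\}$ where each $Y_s$ is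 a row vector over $GF(q)$ of some length whose entries are independent and uniform over $GF(q)$, the $Y_s$ are mutually independent, and each $Y_e$ is a row vector over $GF(q)$ that is a $GF(q)$-linear function of $(Y_f:f\in\mathrm{in}(e))$. $\mathrm{SP}(X)$ is the support of $X$. A rate-capacity tuple is $(\lambda,\omega)$, $\lambda:\mathcal S\to\mathbb R_{\ge0}$, $\omega:\mathcal E\to\mathbb R_{\ge0}$; it is $0$-achievable subject to the $q$-linearity constraint if there exist $q$-linear network codes $\{Y^n_f\}$ ($n=1,2,\dots$) and $c_n>0$ with $\lim_nc_n\log|\mathrm{SP}(Y^n_s)|\ge\lambda(s)$ for all $s$, $\lim_nc_n\log|\mathrm{SP}(Y^n_e)|\le\omega(e)$ for all $e$, and $H(Y^n_s\mid Y^n_f,f\in\mathrm{in}(u))=0$ for all $n$, $s$, $u\in D(s)$. For a finite set $\mathcal N$, $\mathcal H[\mathcal N]$ is the set of real functions on subsets of $\mathcal N$; $g(\alpha\mid\beta)=g(\alpha\cup\beta)-g(\beta)$. A function $h\in\mathcal H[\mathcal N]$ is $q$-representable if there are subspaces $\mathbb U_i$ ($i\in\mathcal N$) of a finite-dimensional vector space over $GF(q)$ with $h(\alpha)=\dim\langle\mathbb U_i:i\in\alpha\rangle$ (dimension of their span) for all $\alpha$; weakly $q$-representable if $ch$ is $q$-representable for some $c>0$; almost $q$-representable if it is a limit of weakly $q$-representable functions. $\bar\Upsilon^*_q(\mathsf P)$ is the set of almost $q$-representable functions in $\mathcal H[\mathcal S\cup\mathcal E]$. $\mathcal C_I(\mathsf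 P)=\{h:h(\mathcal S)=\sum_sh(s)\}$, $\mathcal C_T(\mathsf P)=\{h:h(e\mid\mathrm{in}(e))=0\ \forall e\in\mathcal E\}$, $\mathcal C_D(\mathsf P)=\{h:h(s\mid\mathrm{in}(u))=0\ \forall s\in\mathcal S,u\in D(s)\}$. $\mathrm{proj}_{\mathsf P}[h]=(h(s),s\in\mathcal S;h(e),e\in\mathcal E)$, applied elementwise to sets. For a set $\mathcal R$ of tuples, $\mathsf{CL}(\mathcal R)$ is the set of $(\lambda,\omega)$ such that there exist $(\lambda^n,\omega^n)\in\mathcal R$ and $c_n>0$ with $\lim_nc_n\omega^n(e)\le\omega(e)$ and $\lim_nc_n\lambda^n(s)\ge\lambda(s)$ for all $e,s$. *)

(* Defs.v *)
From HB Require Import structures.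
From mathcomp Require Import all_boot all_order all_algebra.
From mathcomp Require Import all_classical all_reals all_analysis.
Set Implicit Arguments. Unset Strict Implicit. Unset Printing Implicit Defensive.
Import Order.TTheory GRing.Theory Num.Theory.
Import numFieldNormedType.Exports.
Local Open Scope classical_set_scope.
Local Open Scope ring_scope.

Record problem := Problem {
  pV : finType;
  pE : finType;
  pS : finType;
  ptail : pE -> pV;
  phead : pE -> {set pV};
  pO : pS -> {set pV};              (* where source s is available *)
  pD : pS -> {set pV} }.            (* sinks of source s *)

Definition acyclic (P : problem) : Prop :=
  forall (f : pE P) (p : seq (pE P)),
    path (fun a b => ptail b \in phead a) f p ->
    ptail f \notin phead (last f p).

(* index set S u E (sources are imaginary edges) *)
Definition idx (P : problem) : finType := (pS P + pE P)%type.

Definition headf (P : problem) (f : idx P) : {set pV P} :=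
  match f with inl s => pO s | inr e => phead e end.

Definition in_e (P : problem) (e : pE P) : {set idx P} :=
  [set f : idx P | ptail e \in headf f]%SET.
Definition in_u (P : problem) (u : pV P) : {set idx P} :=
  [set f : idx P | u \in headf f]%SET.

Section Codes.
Variables (P : problem) (F : finFieldType).

Record qcode := QCode {
  ksrc : pS P -> nat;
  kedge : pE P -> nat;
  Yedge : forall e : pE P,
     {dffun forall s : pS P, 'rV[F]_(ksrc s)} -> 'rV[F]_(kedge e) }.

Arguments Yedge : clear implicits.
Definition msg (C : qcode) := {dffun forall s : pS P, 'rV[F]_(ksrc C s)}.

Definition len (C : qcode) (f : idx P) : nat :=
  match f with inl s => ksrc C s | inr e => kedge C e end.

(* Y_f as a function of the (independent, uniform) source messages *)
Definition Yf (C : qcode) (f : idx P) : msg C -> 'rV[F]_(len C f) :=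
  match f as f0 return msg C -> 'rV[F]_(len C f0) with
  | inl s => fun x => x s
  | inr e => Yedge C e
  end.

Definition is_linear_code (C : qcode) : Prop :=
  forall e : pE P, exists A : forall f : idx P, 'M[F]_(len C f, kedge C e),
    forall x : msg C, Yedge C e x = \sum_(f in in_e e) (Yf f x *m A f).

(* support of Y_f : its set of values (the joint source law is uniform,
   hence of full support) *)
Definition SP (C : qcode) (f : idx P) : {set 'rV[F]_(len C f)} :=
  [set Yf f x | x : msg C]%SET.

(* H(Y_s | Y_f, f in in(u)) = 0 for all s and u in D(s): since the joint
   law has full support, this says Y_s is determined by (Y_f, f in in(u)). *)
Definition decodes (C : qcode) : Prop :=
  forall (s : pS P) (u : pV P), u \in pD s ->
  forall x x' : msg C,
    (forall f : idx P, f \in in_u u -> Yf f x = Yf f x') -> x s = x' s.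
End Codes.

Definition zero_achievable_qlin (R : realType) (P : problem) (F : finFieldType)
  (lam : pS P -> R) (om : pE P -> R) : Prop :=
  exists (C : nat -> qcode P F) (c : nat -> R),
    (forall n, is_linear_code (C n)) /\
    (forall n, decodes (C n)) /\
    (forall n, 0 < c n) /\
    (forall s : pS P, exists l : R,
        (fun n => c n * ln (#|SP (C n) (inl s)|)%:R) @ \oo --> l /\ lam s <= l) /\
    (forall e : pE P, exists l : R,
        (fun n => c n * ln (#|SP (C n) (inr e)|)%:R) @ \oo --> l /\ l <= om e).

Section Rep.
Variables (R : realType) (P : problem) (F : finFieldType).
Local Notation H := ({set idx P} -> R).

Definition q_representable (h : H) : Prop :=
  exists (n : nat) (U : idx P -> 'M[F]_n),
    forall A : {set idx P}, h A = (\rank (\sum_(i in A) U i)%MS)%:R.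

Definition weakly_q_representable (h : H) : Prop :=
  exists c : R, 0 < c /\ q_representable (fun A => c * h A).

Definition almost_q_representable (h : H) : Prop :=
  exists hk : nat -> H, (forall k, weakly_q_representable (hk k)) /\
    forall A : {set idx P}, (fun k => hk k A) @ \oo --> h A.

Definition srcs : {set idx P} := [set f : idx P | if f is inl _ then true else false]%SET.

Definition C_I (h : H) : Prop := h srcs = \sum_(s : pS P) h [set (inl s : idx P)]%SET.
Definition C_T (h : H) : Prop :=
  forall e : pE P, h ([set (inr e : idx P)]%SET :|: in_e e) - h (in_e e) = 0.
Definition C_D (h : H) : Prop :=
  forall (s : pS P) (u : pV P), u \in pD s ->
    h ([set (inl s : idx P)]%SET :|: in_u u) - h (in_u u) = 0.

Definition proj_region (lam : pS P -> R) (om : pE P -> R) : Prop :=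
  exists h : H, almost_q_representable h /\ C_I h /\ C_T h /\ C_D h /\
    (forall s, lam s = h [set (inl s : idx P)]%SET) /\ (forall e, om e = h [set (inr e : idx P)]%SET).
End Rep.

Definition CL (R : realType) (P : problem)
  (Rg : (pS P -> R) -> (pE P -> R) -> Prop)
  (lam : pS P -> R) (om : pE P -> R) : Prop :=
  exists (lamn : nat -> pS P -> R) (omn : nat -> pE P -> R) (c : nat -> R),
    (forall n, Rg (lamn n) (omn n)) /\ (forall n, 0 < c n) /\
    (forall e, exists l : R, (fun n => c n * omn n e) @ \oo --> l /\ l <= om e) /\
    (forall s, exists l : R, (fun n => c n * lamn n s) @ \oo --> l /\ lam s <= l).

(* Main.v *)
Require Import Defs.
From HB Require Import structures.
From mathcomp Require Import all_boot all_order all_algebra.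
From mathcomp Require Import all_classical all_reals all_analysis.
From mathcomp Require Import zify lra ring.
Set Implicit Arguments. Unset Strict Implicit. Unset Printing Implicit Defensive.
Import Order.TTheory GRing.Theory Num.Theory.
Import numFieldNormedType.Exports.
Local Open Scope ring_scope.

Section LA.
Variable F : fieldType.

Lemma dual_rank (I : finType) (P : pred I) n (k : I -> nat)
  (T : forall i, 'M[F]_(n, k i)) :
  \rank (\bigcap_(i | P i) kermx (T i))%MS =
  (n - \rank (\sum_(i | P i) <<(T i)^T>>)%MS)%N.
Proof.
set W := (\bigcap_(i | P i) kermx (T i))%MS.
set X := (\sum_(i | P i) <<(T i)^T>>)%MS.
suff e : (W :=: kermx X^T)%MS by rewrite e mxrank_ker mxrank_tr.
apply/eqmxP/andP; split.
  apply/sub_kermxP; apply: trmx_inj; rewrite trmx_mul trmxK trmx0.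
  apply/sub_kermxP/sumsmx_subP => i Pi; rewrite genmxE.
  apply/sub_kermxP; apply: trmx_inj; rewrite trmx_mul !trmxK trmx0.
  by apply/sub_kermxP; rewrite (bigcapmx_inf i Pi (submx_refl _)).
apply/sub_bigcapmxP => i Pi; apply/sub_kermxP.
set K := kermx X^T.
have hX : (X <= kermx K^T)%MS.
  apply/sub_kermxP; apply: trmx_inj; rewrite trmx_mul trmxK trmx0; exact: mulmx_ker.
have hT : ((T i)^T <= kermx K^T)%MS.
  apply: submx_trans hX; rewrite -(genmxE (T i)^T); exact: (sumsmx_sup i Pi (submx_refl _)).
apply: trmx_inj; rewrite trmx_mul trmx0; exact/sub_kermxP.
Qed.

Lemma rank_sum_le (I : finType) (P : pred I) n (A : I -> 'M[F]_n) :
  (\rank (\sum_(i | P i) A i)%MS <= \sum_(i | P i) \rank (A i))%N.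
Proof.
elim/big_ind2: _ => //; first by rewrite mxrank0.
move=> a b c d hab hcd; apply: leq_trans (mxrank_adds_leqif a c).1 _.
exact: leq_add.
Qed.

Lemma rankZ n (N : 'M[F]_n) m (X : 'M[F]_(m, n)) :
  (\rank X <= \rank (X *m (kermx N^T)^T) + \rank N)%N.
Proof.
rewrite -{1}(mxrank_mul_ker X (kermx N^T)^T) leq_add2l.
apply: leq_trans (mxrankS (capmxSr _ _)) _.
rewrite mxrank_ker mxrank_tr mxrank_ker mxrank_tr subKn //; exact: rank_leq_col.
Qed.

Lemma NZ n (N : 'M[F]_n) : N *m (kermx N^T)^T = 0.
Proof. by apply: trmx_inj; rewrite trmx_mul trmxK trmx0 mulmx_ker. Qed.

Lemma mulpert m1 m2 n p (X : 'M[F]_(m1, n)) (Y : 'M[F]_(m2, n)) (D : 'M[F]_(n, p)) :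
  (X <= Y)%MS -> (\rank (Y *m D) <= \rank (X *m D) + (\rank Y - \rank X))%N.
Proof.
move=> sXY.
have h1 : (Y <= (Y :\: X) + X)%MS.
  by rewrite -{1}(addsmx_diff_cap_eq Y X) addsmxS ?capmxSr.
have h2 : (\rank (Y :\: X) <= \rank Y - \rank X)%N.
  have e := mxrank_cap_compl Y X.
  have r : (\rank X <= \rank (Y :&: X))%N by apply: mxrankS; rewrite sub_capmx sXY submx_refl.
  lia.
apply: leq_trans (mxrankS (submxMr D h1)) _.
rewrite (addsmxMr _ _ D).
apply: leq_trans (mxrank_adds_leqif _ _).1 _.
rewrite addnC leq_add2l; apply: leq_trans (mxrankM_maxl _ _) h2.
Qed.

Lemma sumpert (I : finType) (P : pred I) n (X Y : I -> 'M[F]_n) :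
  (forall i, P i -> X i <= Y i)%MS ->
  (\rank (\sum_(i | P i) Y i)%MS <=
    \rank (\sum_(i | P i) X i)%MS + \sum_(i | P i) (\rank (Y i) - \rank (X i)))%N.
Proof.
move=> sXY.
have h1 : ((\sum_(i | P i) Y i) <= (\sum_(i | P i) X i) + \sum_(i | P i) (Y i :\: X i))%MS.
  apply/sumsmx_subP => i Pi.
  apply: submx_trans (_ : Y i <= (Y i :\: X i) + X i)%MS _.
    by rewrite -{1}(addsmx_diff_cap_eq (Y i) (X i)) addsmxS ?capmxSr.
  rewrite addsmxC addsmxS //; exact: (sumsmx_sup i Pi (submx_refl _)).
apply: leq_trans (mxrankS h1) _.
apply: leq_trans (mxrank_adds_leqif _ _).1 _.
rewrite leq_add2l; apply: leq_trans (rank_sum_le _ _) _.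
apply: leq_sum => i Pi.
have e := mxrank_cap_compl (Y i) (X i).
have r : (\rank (X i) <= \rank (Y i :&: X i))%N by apply: mxrankS; rewrite sub_capmx sXY // submx_refl.
lia.
Qed.

Lemma fact_sum (I : finType) (P : pred I) n (A : 'M[F]_n) (B : I -> 'M[F]_n) :
  (A <= \sum_(i | P i) B i)%MS ->
  exists D : I -> 'M[F]_n, A^T = \sum_(i | P i) (B i)^T *m D i.
Proof.
case/sub_sumsmxP => u ->; exists (fun i => (u i)^T).
rewrite raddf_sum; apply: eq_bigr => i _; exact: trmx_mul.
Qed.

End LA.

Section Card.
Variable F : finFieldType.

Lemma card_sub n m (M : 'M[F]_(m, n)) :
  #|[set v : 'rV[F]_n | (v <= M)%MS]| = (#|F| ^ \rank M)%N.
Proof.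
have -> : [set v : 'rV[F]_n | (v <= M)%MS] =
          [set u *m row_base M | u : 'rV[F]_(\rank M)].
  apply/setP => v; rewrite inE; apply/idP/imsetP.
    rewrite -(eq_row_base M) => /submxP [D ->]; by exists D.
  by move=> [u _ ->]; rewrite -(eq_row_base M) submxMl.
rewrite card_imset; last exact: row_free_inj (row_base_free M).
by rewrite card_mx mul1n.
Qed.

Lemma card_img_mul n m (M : 'M[F]_(m, n)) :
  #|[set u *m M | u : 'rV[F]_m]| = (#|F| ^ \rank M)%N.
Proof.
rewrite -card_sub; apply: eq_card => v; rewrite [RHS]inE.
apply/imsetP/idP; first by move=> [u _ ->]; rewrite submxMl.
by move/submxP => [D ->]; exists D.
Qed.

End Card.

Lemma subn_inj n a b : (a <= n)%N -> (b <= n)%N -> (n - a = n - b)%N -> a = b.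
Proof. by move=> ha hb /(congr1 (subn n)); rewrite !subKn. Qed.

Section Acyc.
Variable P : problem.
Hypothesis hP : acyclic P.
Local Notation Rf := (fun a b : pE P => ptail b \in phead a).

Lemma acyc_uniq (f : pE P) p : path Rf f p -> uniq (f :: p).
Proof.
elim: p f => [|g p IH] f; first by [].
rewrite [path _ _ _]/= => /andP [Rfg pth].
rewrite cons_uniq (IH g pth) andbT; apply/negP => fin.
have : path Rf f (g :: p) by rewrite /= Rfg.
case/splitPr: fin => p1 p2.
rewrite cat_path /= => /and3P [pp1 Rl _].
by have := hP pp1; rewrite Rl.
Qed.

Lemma acyc_ind (Q : pE P -> Prop) :
  (forall e, (forall f : pE P, ptail e \in phead f -> Q f) -> Q e) -> forall e, Q e.
Proof.
move=> IH e; apply: contrapT => nQe.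
have chain : forall k, exists f p, [/\ size p = k, path Rf f p &
    (forall g, g \in f :: p -> ~ Q g)].
  elim => [|k [f [p [sz pth nQ]]]].
    by exists e, [::]; split => // g; rewrite inE => /eqP ->.
  have nQf : ~ Q f by apply: nQ; rewrite inE eqxx.
  have [f' [tf nQf']] : exists f', ptail f \in phead f' /\ ~ Q f'.
    apply: contrapT => h; apply: nQf; apply: IH => f' tf; apply: contrapT => nq.
    by apply: h; exists f'.
  exists f', (f :: p); split => //=; first by rewrite sz.
    by rewrite tf pth.
  by move=> g; rewrite inE => /orP [/eqP -> // | ]; exact: nQ.
have [f [p [sz pth _]]] := chain #|pE P|.
have u := acyc_uniq pth.
have := max_card (mem (f :: p)).
by move/card_uniqP: u => ->; rewrite /= sz ltnn.
Qed.
End Acyc.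

Section Msg.
Variables (F : finFieldType) (I : finType) (k : I -> nat).
Local Notation msgT := {dffun forall i, 'rV[F]_(k i)}.

Lemma card_proj (s : I) : #|[set x s | x : msgT]| = (#|F| ^ k s)%N.
Proof.
have -> : [set x s | x : msgT] = [set: 'rV[F]_(k s)].
  apply/setP => v; rewrite inE; apply/imsetP.
  exists (finfun (@dfwith _ (fun j => 'rV[F]_(k j)) (fun j => 0) s v)) => //.
  by rewrite ffunE /dfwith; case: eqP => // e; rewrite eq_axiomK.
by rewrite cardsT card_mx mul1n.
Qed.

Lemma card_sum p (L : forall i, 'M[F]_(k i, p)) :
  #|[set \sum_i x i *m L i | x : msgT]| = (#|F| ^ \rank (\sum_i <<L i>>)%MS)%N.
Proof.
rewrite -card_sub; apply: eq_card => v; rewrite [RHS]inE.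
apply/imsetP/idP.
  move=> [x _ ->]; apply: summx_sub_sums => i _; by rewrite genmxE submxMl.
case/sub_sumsmxP => u ->.
exists (finfun (fun i => u i *m <<L i>>%MS *m pinvmx (L i))) => //.
apply: eq_bigr => i _; rewrite ffunE mulmxKpV //.
by rewrite -(genmxE (L i)) submxMl.
Qed.

Definition pp (j : 'I_#|I|) := k (enum_val j).
Definition NN := (\sum_(j < #|I|) pp j)%N.
Definition cat (x : msgT) : 'rV[F]_NN := mxrow (fun j => x (enum_val j)).
Definition uncat (X : 'rV[F]_NN) : msgT :=
  finfun (fun i => conform_mx (0 : 'rV[F]_(k i)) (submxrow X (enum_rank i))).

Lemma uncatK X : cat (uncat X) = X.
Proof.
apply/mxrowP => j; rewrite mxrowK ffunE.
have h : forall j' (e : j' = j),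
  conform_mx (0 : 'rV[F]_(k (enum_val j))) (submxrow X j') = submxrow X j.
  by move=> j' ->; rewrite conform_mx_id.
exact: h (enum_valK j).
Qed.

Lemma cat_surj (X : 'rV[F]_NN) : exists x, cat x = X.
Proof. by exists (uncat X); rewrite uncatK. Qed.

Definition sel (s : I) : 'M[F]_(NN, k s) :=
  mxcol (fun j => if enum_val j == s then conform_mx (0 : 'M[F]_(pp j, k s)) (1%:M : 'M[F]_(pp j)) else 0).

Lemma cat_sel (x : msgT) s : cat x *m sel s = x s.
Proof.
rewrite /cat /sel mul_mxrow_mxcol (bigD1 (enum_rank s)) //=.
rewrite big1 ?addr0; last first.
  move=> j nj; case: eqP => [ej|]; last by rewrite mulmx0.
  by case/negP: nj; rewrite -ej enum_valK.
have h : forall s' (e : s' = s),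
  x s' *m (if s' == s then conform_mx (0 : 'M[F]_(k s', k s)) (1%:M : 'M[F]_(k s')) else 0) = x s.
  by move=> _ ->; rewrite eqxx conform_mx_id mulmx1.
exact: h (enum_rankK s).
Qed.

Lemma NN_sum : NN = (\sum_i k i)%N.
Proof. by rewrite /NN /pp (big_enum_val (A := predT) k). Qed.

End Msg.

Section Fwd.
Variables (P : problem) (F : finFieldType) (C : qcode P F).
Hypotheses (hP : acyclic P) (hlin : is_linear_code C) (hdec : decodes C).

Local Notation NC := (NN (ksrc C)).
Local Notation catC := (@cat F (pS P) (ksrc C)).

Lemma lin_edge (e : pE P) : exists M : 'M[F]_(NC, kedge C e),
  forall x : msg C, @Yedge _ _ C e x = catC x *m M.
Proof.
elim/(acyc_ind hP): e => e IH.
have H : forall g : pE P, exists M : 'M[F]_(NC, kedge C g),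
    ptail e \in phead g -> forall x : msg C, @Yedge _ _ C g x = catC x *m M.
  move=> g; case: (boolP (ptail e \in phead g)) => h.
    by have [M hM] := IH g h; exists M.
  by exists 0.
pose Me g := proj1_sig (cid (H g)).
have hMe g := proj2_sig (cid (H g)).
pose Mf (f : idx P) : 'M[F]_(NC, len C f) :=
  match f as f0 return 'M[F]_(NC, len C f0) with
  | inl s => sel F (ksrc C) s | inr g => Me g end.
have hMf : forall f, f \in in_e e -> forall x : msg C, Yf f x = catC x *m Mf f.
  case=> [s|g] fin x /=; first by rewrite cat_sel.
  by apply: (hMe g); move: fin; rewrite inE.
have [A hA] := hlin e.
exists (\sum_(f in in_e e) Mf f *m A f) => x.
rewrite hA mulmx_sumr; apply: eq_bigr => f fin; by rewrite (hMf f fin) mulmxA.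
Qed.

Lemma lin_rep (f : idx P) : exists M : 'M[F]_(NC, len C f),
  forall x : msg C, Yf f x = catC x *m M.
Proof.
case: f => [s|e] /=; first by exists (sel F (ksrc C) s) => x; rewrite cat_sel.
exact: lin_edge.
Qed.

Definition Mf f := proj1_sig (cid (lin_rep f)).
Lemma Mf_spec f x : Yf f x = catC x *m Mf f.
Proof. exact: (proj2_sig (cid (lin_rep f))). Qed.

Definition Uf f : 'M[F]_NC := <<(Mf f)^T>>%MS.
Definition gf (A : {set idx P}) := \rank (\sum_(i in A) Uf i)%MS.

Lemma kc (A : {set idx P}) (j : idx P) :
  (forall X : 'rV[F]_NC, (forall f, f \in A -> X *m Mf f = 0) -> X *m Mf j = 0) ->
  gf ([set j] :|: A) = gf A.
Proof.
move=> hX.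
have sub : (\bigcap_(i in A) kermx (Mf i) <= kermx (Mf j))%MS.
  apply/row_subP => r; apply/sub_kermxP; apply: hX => f fA.
  apply/sub_kermxP; apply: submx_trans (row_sub r _) _.
  exact: (bigcapmx_inf f fA (submx_refl _)).
have e1 : \rank (\bigcap_(i in [set j] :|: A) kermx (Mf i))%MS =
          \rank (\bigcap_(i in A) kermx (Mf i))%MS.
  apply/eqP; rewrite eqn_leq !mxrankS //.
    apply/sub_bigcapmxP => i; rewrite !inE => /orP [/eqP -> //|iA].
    exact: (bigcapmx_inf i iA (submx_refl _)).
  apply/sub_bigcapmxP => i iA; apply: (bigcapmx_inf i) (submx_refl _).
  by rewrite !inE iA orbT.
rewrite !(dual_rank (fun i => i \in _)) in e1.
have r1 := rank_leq_col (\sum_(i in [set j] :|: A) Uf i)%MS.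
have r2 := rank_leq_col (\sum_(i in A) Uf i)%MS.
exact: (subn_inj r1 r2 e1).
Qed.

Lemma fwd_CT e : gf ([set inr e] :|: in_e e) = gf (in_e e).
Proof.
apply: kc => X hX; have [x ex] := cat_surj X.
rewrite -ex -Mf_spec /=; have [A hA] := hlin e; rewrite hA.
apply: big1 => f fin; by rewrite Mf_spec ex hX // mul0mx.
Qed.

Lemma fwd_CD s u : u \in pD s -> gf ([set inl s] :|: in_u u) = gf (in_u u).
Proof.
move=> us; apply: kc => X hX.
have e0 := uncatK (0 : 'rV[F]_NC).
have eX := uncatK X.
rewrite -eX -Mf_spec /=.
have -> : uncat X s = uncat 0 s.
  apply: (hdec us) => f fin; rewrite !Mf_spec eX e0 hX // mul0mx //.
by have := Mf_spec (inl s) (uncat 0); rewrite e0 mul0mx /= => ->.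
Qed.

Lemma fwd_card f : #|SP C f| = (#|F| ^ gf [set f])%N.
Proof.
rewrite /gf big_set1 /Uf mxrank_gen mxrank_tr -card_img_mul.
apply: eq_card => v; apply/imsetP/imsetP.
  by move=> [x _ ->]; exists (catC x) => //; rewrite Mf_spec.
by move=> [X _ ->]; have [x <-] := cat_surj X; exists x => //; rewrite Mf_spec.
Qed.

Lemma fwd_src s : gf [set inl s] = ksrc C s.
Proof.
have := fwd_card (inl s).
have -> : #|SP C (inl s)| = (#|F| ^ ksrc C s)%N by rewrite /SP /= card_proj.
move/eqP; rewrite eqn_exp2l; first by move/eqP.
exact: card_finNzRing_gt1.
Qed.

Lemma fwd_CI : gf (srcs P) = (\sum_s gf [set inl s])%N.
Proof.
under eq_bigr do rewrite fwd_src.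
rewrite -NN_sum.
have z : (\bigcap_(i in srcs P) kermx (Mf i) <= (0 : 'M[F]_NC))%MS.
  apply/row_subP => r; set X := row r _.
  have hX : forall s, X *m Mf (inl s) = 0.
    move=> s; apply/sub_kermxP; apply: submx_trans (row_sub r _) _.
    by apply: (bigcapmx_inf (inl s)) (submx_refl _); rewrite inE.
  suff -> : X = 0 by rewrite sub0mx.
  rewrite -(uncatK X).
  have h0 : forall s, uncat X s = 0.
    move=> s; have := Mf_spec (inl s) (uncat X); rewrite uncatK hX /= => ->//.
  apply/mxrowP => j; rewrite mxrowK h0.
  by apply/matrixP => a b; rewrite !mxE.
have := mxrankS z; rewrite mxrank0 leqn0 (dual_rank (fun i => i \in _)) => /eqP.
have := rank_leq_col (\sum_(i in srcs P) Uf i)%MS.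
rewrite /gf /Uf => h1 /eqP; rewrite subn_eq0 => h2; apply/eqP; by rewrite eqn_leq h1.
Qed.

End Fwd.

Section Bwd.
Variables (P : problem) (F : finFieldType) (n : nat) (U : idx P -> 'M[F]_n).
Hypothesis hP : acyclic P.

Definition g (A : {set idx P}) := \rank (\sum_(i in A) U i)%MS.
Definition Uin (A : {set idx P}) := (\sum_(i in A) U i)%MS.
Definition Nm : 'M[F]_n :=
  ((\sum_e (U (inr e) :\: Uin (in_e e))) +
   \sum_(p : pS P * pV P | p.2 \in pD p.1) (U (inl p.1) :\: Uin (in_u p.2)))%MS.
Definition Zb := kermx Nm^T.
Definition U' i := U i *m Zb^T.
Definition T' i := (U' i)^T.
Definition Q s := (\bigcap_(t | t != s) kermx (T' (inl t)))%MS.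
Definition QP s := Q s *m T' (inl s).
Definition ks s := \rank (QP s).
Definition B s : 'M[F]_(ks s, n) := row_base (QP s).
Definition G s : 'M[F]_(ks s, n) := B s *m pinvmx (QP s) *m Q s.
Definition w (x : {dffun forall s, 'rV[F]_(ks s)}) := \sum_s x s *m G s.

Lemma G1 s : G s *m T' (inl s) = B s.
Proof. by rewrite -mulmxA -/(QP s) mulmxKpV // /B eq_row_base. Qed.

Lemma G2 s t : t != s -> G s *m T' (inl t) = 0.
Proof.
move=> ts; apply/sub_kermxP; apply: submx_trans (submxMl _ _) _.
exact: (bigcapmx_inf t ts (submx_refl _)).
Qed.

Lemma w_src x t : w x *m T' (inl t) = x t *m B t.
Proof.
rewrite /w mulmx_suml (bigD1 t) //= -mulmxA G1 big1 ?addr0 // => s st.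
by rewrite -mulmxA G2 ?mulmx0 // eq_sym.
Qed.

Lemma diff_sub (a : idx P) (A : {set idx P}) :
  (U a :\: Uin A <= Nm)%MS -> (U' a <= \sum_(i in A) U' i)%MS.
Proof.
move=> hN.
have h : (U a <= Nm + Uin A)%MS.
  by rewrite -{1}(addsmx_diff_cap_eq (U a) (Uin A)) addsmxS ?capmxSr.
apply: submx_trans (submxMr Zb^T h) _.
rewrite addsmxMr /Zb NZ adds0mx_id /Uin sumsmxMr.
exact: submx_refl.
Qed.

Lemma CT' e : (U' (inr e) <= \sum_(i in in_e e) U' i)%MS.
Proof.
apply: diff_sub; apply: submx_trans (addsmxSl _ _).
exact: (sumsmx_sup e isT (submx_refl _)).
Qed.

Lemma CD' s u : u \in pD s -> (U' (inl s) <= \sum_(i in in_u u) U' i)%MS.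
Proof.
move=> us; apply: diff_sub; apply: submx_trans (addsmxSr _ _).
exact: (sumsmx_sup (s, u) us (submx_refl _)).
Qed.

Lemma E_src e : (U' (inr e) <= \sum_t U' (inl t))%MS.
Proof.
elim/(acyc_ind hP): e => e IH.
apply: submx_trans (CT' e) _; apply/sumsmx_subP => [[t|f]] fin.
  exact: (sumsmx_sup t isT (submx_refl _)).
by apply: IH; move: fin; rewrite inE.
Qed.


Definition Cb : qcode P F :=
  @QCode P F ks (fun _ => n) (fun e x => w x *m T' (inr e)).

Lemma Cb_lin : is_linear_code Cb.
Proof.
move=> e; have [D hD] := fact_sum (CT' e).
pose A (f : idx P) : 'M[F]_(len Cb f, kedge Cb e) :=
  match f as f0 return 'M[F]_(len Cb f0, kedge Cb e) with
  | inl t => B t *m D (inl t) | inr g => D (inr g) end.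
exists A => x /=.
rewrite /T' hD mulmx_sumr; apply: eq_bigr => -[t|f] _; last by rewrite mulmxA.
rewrite mulmxA -/(T' (inl t)) (w_src x t) -mulmxA //.
Qed.

Lemma Cb_dec : decodes Cb.
Proof.
move=> s u us x x' heq.
apply: (row_free_inj (row_base_free (QP s))); rewrite -/(B s) -!w_src.
have [E hE] := fact_sum (CD' us).
rewrite /T' hE !mulmx_sumr; apply: eq_bigr => [[t|f]] fin.
  by rewrite !mulmxA -/(T' (inl t)) !w_src; have := heq _ fin; rewrite /= => ->.
by rewrite !mulmxA; have := heq _ fin; rewrite /= => ->.
Qed.

Definition re e := \rank (\sum_s <<G s *m T' (inr e)>>)%MS.

Lemma Cb_card_src s : #|SP Cb (inl s)| = (#|F| ^ ks s)%N.
Proof. by rewrite /SP /= card_proj. Qed.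

Lemma Cb_card_edge e : #|SP Cb (inr e)| = (#|F| ^ re e)%N.
Proof.
rewrite /re -card_sum; apply: eq_card => v.
rewrite /SP /=; apply/imsetP/imsetP => [[x _ ->]|[x _ ->]]; exists x => //;
  by rewrite /w mulmx_suml; apply: eq_bigr => i _; rewrite mulmxA.
Qed.


Lemma g1 f : g [set f] = \rank (U f).
Proof. by rewrite /g big_set1. Qed.

Lemma sum_srcs : (\sum_(i in srcs P) U i)%MS = (\sum_t U (inl t))%MS.
Proof.
rewrite (big_sumType _ (fun i => i \in srcs P)) /=.
rewrite [X in (_ + X)%MS]big_pred0; last by move=> e; rewrite inE.
rewrite addsmx0_id; apply: eq_bigl => t; by rewrite inE.
Qed.

Lemma natSL (ks0 a b n0 rQ rI gS rN S : nat) :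
  rQ = (n0 - a)%N -> rI = (n0 - b)%N -> (ks0 + rI)%N = rQ -> (a <= n0)%N -> (b <= n0)%N ->
  (a <= S)%N -> (gS <= b + rN)%N -> (gS <= ks0 + S + rN)%N.
Proof. lia. Qed.

Lemma SL s : (g (srcs P) <= ks s + \sum_(t | t != s) \rank (U' (inl t)) + \rank Nm)%N.
Proof.
have e2 : (Q s :&: kermx (T' (inl s)))%MS = (\bigcap_t kermx (T' (inl t)))%MS.
  by rewrite [RHS](bigD1 s) //= capmxC.
have e1 := mxrank_mul_ker (Q s) (T' (inl s)); rewrite e2 in e1.
apply: (natSL (dual_rank (fun t => t != s) (fun t => T' (inl t)))
              (dual_rank predT (fun t => T' (inl t))) e1).
- exact: rank_leq_col.
- exact: rank_leq_col.
- apply: leq_trans (rank_sum_le _ _) _; apply: leq_sum => t _.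
  by rewrite mxrank_gen /T' trmxK.
- rewrite /g sum_srcs; apply: leq_trans (rankZ Nm _) _; rewrite leq_add2r.
  rewrite -genmx_sums mxrank_gen; apply: mxrankS; rewrite sumsmxMr.
  apply/sumsmx_subP => t _; by rewrite (sumsmx_sup t) // /T' trmxK.
Qed.


Definition dI := (\sum_t g [set inl t] - g (srcs P))%N.
Definition rN := \rank Nm.

Lemma B1 s : (ks s <= g [set inl s])%N.
Proof.
rewrite g1; apply: leq_trans (mxrankM_maxr _ _) _.
by rewrite mxrank_tr; exact: mxrankM_maxl.
Qed.

Lemma natB2 (gS ks0 S' S2 rN0 gs Stot : nat) :
  (gS <= ks0 + S' + rN0)%N -> (S' <= S2)%N -> Stot = (gs + S2)%N ->
  (gs <= ks0 + (Stot - gS) + rN0)%N.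
Proof. lia. Qed.

Lemma sumU'_le s : (\sum_(t | t != s) \rank (U' (inl t)) <= \sum_(t | t != s) g [set inl t])%N.
Proof. apply: leq_sum => t _; rewrite g1; exact: mxrankM_maxl. Qed.

Lemma B2 s : (g [set inl s] <= ks s + dI + rN)%N.
Proof.
apply: (natB2 (SL s) (sumU'_le s)).
by rewrite (bigD1 s).
Qed.

Lemma natB2' (gS ks0 S' rt rN0 Stot Sall : nat) :
  (gS <= ks0 + S' + rN0)%N -> (rt + S')%N = Sall -> (Sall <= Stot)%N ->
  (rt <= ks0 + (Stot - gS) + rN0)%N.
Proof. lia. Qed.

Lemma B2' t : (\rank (U' (inl t)) <= ks t + dI + rN)%N.
Proof.
have e : (\rank (U' (inl t)) + \sum_(u | u != t) \rank (U' (inl u)) =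
           \sum_u \rank (U' (inl u)))%N by rewrite [RHS](bigD1 t).
apply: (natB2' (SL t) e).
apply: leq_sum => u _; rewrite g1; exact: mxrankM_maxl.
Qed.

Lemma B3 e : (re e <= g [set inr e])%N.
Proof.
rewrite g1; apply: leq_trans (mxrankM_maxl (U (inr e)) Zb^T); rewrite -/(U' _) -mxrank_tr.
apply: mxrankS; apply/sumsmx_subP => s _; by rewrite genmxE submxMl.
Qed.

Lemma GT e (D : pS P -> 'M[F]_n) :
  T' (inr e) = \sum_t T' (inl t) *m D t -> forall s, G s *m T' (inr e) = B s *m D s.
Proof.
move=> hD s; rewrite hD mulmx_sumr (bigD1 s) //= mulmxA G1 big1 ?addr0 // => t ts.
by rewrite mulmxA G2 ?mul0mx.
Qed.

Lemma natB4 (ge r'e rN0 rT rBD S K : nat) :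
  (ge <= r'e + rN0)%N -> (r'e <= rT)%N -> (rT <= rBD + S)%N -> (S <= K)%N ->
  (ge <= rBD + K + rN0)%N.
Proof. lia. Qed.

Lemma natB4b (a b c k d1 d2 : nat) : (a <= b + (c - k))%N -> (c <= k + d1 + d2)%N -> (a - b <= d1 + d2)%N.
Proof. lia. Qed.

Lemma B4 e : (g [set inr e] <= re e + #|pS P| * (dI + rN) + rN)%N.
Proof.
have [D hD] := fact_sum (E_src e).
have hD' : T' (inr e) = \sum_t T' (inl t) *m D t by [].
have hre : re e = \rank (\sum_t <<B t *m D t>>)%MS.
  by rewrite /re; congr (\rank (_)); apply: eq_bigr => s _; rewrite (GT hD').
rewrite hre.
apply: (natB4 _ _ (sumpert (P := predT) (X := fun t => <<B t *m D t>>%MS)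
                          (Y := fun t => <<T' (inl t) *m D t>>%MS) _)).
- rewrite g1 /rN; exact: rankZ.
- rewrite -mxrank_tr -/(T' _) hD'; apply: mxrankS.
  by apply: summx_sub_sums => t _; rewrite genmxE.
- by move=> t _; rewrite !genmxE; apply: submxMr; rewrite /B eq_row_base submxMl.
- apply: (@leq_trans (\sum_(t : pS P) (dI + rN))%N); last by rewrite sum_nat_const.
  apply: leq_sum => t _; rewrite !mxrank_gen.
  have hB : (B t <= T' (inl t))%MS by rewrite /B eq_row_base submxMl.
  have rB : \rank (B t) = ks t by rewrite /B eq_row_base.
  have := mulpert (D t) hB; rewrite rB => h.
  have h' : (\rank (T' (inl t)) <= ks t + dI + rN)%N by rewrite mxrank_tr; exact: B2'.
  exact: (natB4b h h').
Qed.

Lemma setU1_eqmx (a : idx P) (A : {set idx P}) :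
  (\sum_(i in [set a] :|: A) U i :=: U a + \sum_(i in A) U i)%MS.
Proof.
apply/eqmxP/andP; split.
  apply/sumsmx_subP => i; rewrite !inE => /orP [/eqP -> | iA]; first exact: addsmxSl.
  apply: submx_trans (addsmxSr _ _); exact: (sumsmx_sup i iA (submx_refl _)).
rewrite addsmx_sub; apply/andP; split.
  by apply: (sumsmx_sup a) (submx_refl _); rewrite !inE eqxx.
apply/sumsmx_subP => i iA; apply: (sumsmx_sup i) (submx_refl _).
by rewrite !inE iA orbT.
Qed.

Lemma diff_rank a A : \rank (U a :\: Uin A) = (g ([set a] :|: A) - g A)%N.
Proof.
rewrite /g setU1_eqmx -/(Uin A).
have e1 := mxrank_sum_cap (U a) (Uin A).
have e2 := mxrank_cap_compl (U a) (Uin A).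
lia.
Qed.

Definition Dl :=
  (\sum_e (g ([set inr e] :|: in_e e) - g (in_e e)) +
   \sum_(p : pS P * pV P | p.2 \in pD p.1) (g ([set inl p.1] :|: in_u p.2) - g (in_u p.2)))%N.

Lemma B5 : (rN <= Dl)%N.
Proof.
rewrite /rN /Nm /Dl; apply: leq_trans (mxrank_adds_leqif _ _).1 _.
apply: leq_add; apply: leq_trans (rank_sum_le _ _) _; apply: leq_sum => i _;
  by rewrite diff_rank.
Qed.

End Bwd.

Local Open Scope classical_set_scope.
Local Open Scope ring_scope.


Section Glue.
Variables (R : realType) (P : problem) (F : finFieldType).
Hypothesis hP : acyclic P.

Local Notation q := (#|F|%:R : R).

Lemma q_gt1 : 1 < q.
Proof. by rewrite ltr1n; exact: card_finNzRing_gt1. Qed.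

Lemma lnq_gt0 : 0 < ln q.
Proof. exact: ln_gt0 q_gt1. Qed.

Lemma ln_qk (k : nat) : ln ((#|F| ^ k)%N%:R : R) = ln q * k%:R.
Proof. by rewrite natrX lnXn ?mulr_natr // (lt_trans ltr01 q_gt1). Qed.

Lemma fwd_thm (lam : pS P -> R) (om : pE P -> R) :
  zero_achievable_qlin F lam om -> CL (@proj_region R P F) lam om.
Proof.
move=> [C [c [hlin [hdec [hc [hs he]]]]]].
pose hn n (A : {set idx P}) : R := (gf hP (hlin n) A)%:R.
exists (fun n s => hn n [set inl s]%SET), (fun n e => hn n [set inr e]%SET),
  (fun n => c n * ln q); split; [|split; [|split]].
- move=> n; exists (hn n); split; [|split; [|split; [|split]]] => //.
  + exists (fun _ => hn n); split; last by move=> A; exact: cvg_cst.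
    move=> _; exists 1; split => //.
    exists (NN (ksrc (C n))), (Uf hP (hlin n)) => A; by rewrite mul1r.
  + by rewrite /C_I /hn (fwd_CI hP (hlin n)) natr_sum.
  + by move=> e; rewrite /hn (fwd_CT hP (hlin n)) subrr.
  + by move=> s u us; rewrite /hn (fwd_CD hP (hlin n) (hdec n) us) subrr.
- by move=> n; rewrite mulr_gt0 ?hc ?lnq_gt0.
- move=> e; have [l [hl le]] := he e; exists l; split => //.
  suff -> : (fun n => c n * ln q * hn n [set inr e]%SET) =
            (fun n => c n * ln (#|SP (C n) (inr e)|)%:R) by [].
  by apply: funext => n; rewrite (fwd_card hP (hlin n)) ln_qk /hn mulrA.
- move=> s; have [l [hl le]] := hs s; exists l; split => //.
  suff -> : (fun n => c n * ln q * hn n [set inl s]%SET) =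
            (fun n => c n * ln (#|SP (C n) (inl s)|)%:R) by [].
  by apply: funext => n; rewrite (fwd_card hP (hlin n)) ln_qk /hn mulrA.
Qed.


Lemma natsubR (a b : nat) : ((a - b)%N%:R : R) <= `|a%:R - b%:R|.
Proof.
case: (leqP b a) => h; first by rewrite natrB // ger0_norm // subr_ge0 ler_nat.
by move/ltnW: h; rewrite -subn_eq0 => /eqP ->; rewrite normr_ge0.
Qed.

Lemma diffbound (a b : nat) (x y c e : R) : 0 < c -> a%:R = c * x -> b%:R = c * y ->
  `|x - y| <= e -> ((a - b)%N%:R : R) <= c * e.
Proof.
move=> c0 ha hb hxy; apply: le_trans (natsubR a b) _.
by rewrite ha hb -mulrBr normrM gtr0_norm // ler_wpM2l // ltW.
Qed.

Lemma tri (x y hx hy e : R) : hx - hy = 0 -> `|hx - x| < e -> `|hy - y| < e -> `|x - y| <= e + e.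
Proof.
move=> h0; rewrite !ltr_norml => /andP [a b] /andP [a' b'].
rewrite ler_norml; apply/andP; split; lra.
Qed.

Lemma finb (kk gg Y c x hx et J M : R) : 0 < c -> gg = c * x -> kk <= gg -> gg <= kk + M * Y -> Y <= c * et * J -> 0 <= M -> 0 <= J -> 0 < et -> `|hx - x| < et -> `|kk / c - hx| <= et * (M * J + 1).
Proof.
move=> c0 hg h1 h2 hY M0 J0 et0 hn.
have [z ez] : exists z, kk = z * c by exists (kk / c); rewrite divfK // gt_eqF.
rewrite ez mulfK ?gt_eqF //.
have hz1 : z <= x by rewrite -(ler_pM2r c0) -ez mulrC -hg.
have hz2 : x <= z + M * et * J.
  rewrite -(ler_pM2r c0) mulrDl -ez mulrC -hg; apply: le_trans h2 _.
  rewrite lerD2l; apply: le_trans (ler_wpM2l M0 hY) _.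
  by rewrite le_eqVlt; apply/orP; left; apply/eqP; ring.
have p : 0 <= M * et * J by rewrite !mulr_ge0 // ltW.
have -> : et * (M * J + 1) = M * et * J + et by ring.
move: hn; rewrite ltr_norml => /andP [a b].
rewrite ler_norml; apply/andP; split; lra.
Qed.

Lemma dln (c : R) (k : nat) : 0 < c -> (c * ln q)^-1 * ln ((#|F| ^ k)%N%:R) = k%:R / c.
Proof.
move=> c0; rewrite ln_qk; have := lnq_gt0 => l0.
by field; apply/andP; split; rewrite gt_eqF.
Qed.

Lemma coreB (h : {set idx P} -> R) : almost_q_representable F h -> C_I h -> C_T h -> C_D h ->
  forall eps, 0 < eps -> exists (C : qcode P F) (d : R),
   [/\ is_linear_code C, decodes C, 0 < d,
    (forall s, `|d * ln (#|SP C (inl s)|)%:R - h [set inl s]%SET| <= eps) &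
    (forall e, `|d * ln (#|SP C (inr e)|)%:R - h [set inr e]%SET| <= eps)].
Proof.
move=> [hk [hwk hcv]] hCI hCT hCD eps eps0.
pose m := #|pS P|.
pose J : R := (m.+1)%:R + \sum_(e : pE P) 2 + \sum_(p : pS P * pV P | p.2 \in pD p.1) 2.
have J0 : 0 <= J by rewrite /J !addr_ge0 // sumr_ge0.
pose K : R := (m.+1)%:R * J + 1.
have K0 : 0 < K by rewrite /K ltr_wpDl // mulr_ge0.
pose eta := eps / K.
have eta0 : 0 < eta by rewrite divr_gt0.
have hnear : \forall k \near \oo, forall A : {set idx P}, `|h A - hk k A| < eta.
  apply: filter_forall => A; by move: (hcv A) => /cvgr_dist_lt /(_ _ eta0).
have [k hk'] : exists k, forall A, `|h A - hk k A| < eta.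
  by case: hnear => N _ hN; exists N; apply: hN => /=.
have [c [c0 [n [U hU]]]] := hwk k.
have hg : forall A, ((g U A)%:R : R) = c * hk k A by move=> A; rewrite hU.
pose X := (dI U + rN U)%N.
have hX : (X%:R : R) <= c * eta * J.
  rewrite natrD /J !mulrDr -addrA; apply: lerD.
    rewrite /dI; apply: le_trans (natsubR _ _) _.
    rewrite natr_sum; under eq_bigr do rewrite hg.
    rewrite hg -mulr_sumr -mulrBr normrM gtr0_norm // -mulrA ler_pM2l //.
    have -> : \sum_t hk k [set inl t]%SET - hk k (srcs P) =
      \sum_t (hk k [set inl t]%SET - h [set inl t]%SET) + (h (srcs P) - hk k (srcs P)).
      rewrite hCI sumrB; ring.
    apply: le_trans (ler_normD _ _) _.
    apply: (@le_trans _ _ (eta *+ m + eta)); last by rewrite mulr_natr mulrSr.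
    apply: lerD; last exact: ltW.
    apply: le_trans (ler_norm_sum _ _ _) _.
    rewrite -sumr_const; apply: ler_sum => t _; rewrite distrC; exact: ltW.
  apply: (@le_trans _ _ (Dl U)%:R); first by rewrite ler_nat B5.
  rewrite /Dl natrD !natr_sum !mulr_sumr; apply: lerD; apply: ler_sum => i hi.
    have -> : c * eta * 2 = c * (eta + eta) by ring.
    apply: diffbound c0 (hg _) (hg _) _; apply: tri (hCT i) (hk' _) (hk' _).
  have -> : c * eta * 2 = c * (eta + eta) by ring.
    apply: diffbound c0 (hg _) (hg _) _; apply: tri (hCD _ _ hi) (hk' _) (hk' _).
exists (Cb U), ((c * ln q)^-1); split.
- exact: Cb_lin.
- exact: Cb_dec.
- by rewrite invr_gt0 mulr_gt0 // lnq_gt0.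
- move=> s; rewrite Cb_card_src dln //.
  have := finb (M := m.+1%:R) c0 (hg [set inl s]%SET) _ _ hX _ J0 eta0 (hk' [set inl s]%SET).
  move=> H; have -> : eps = eta * (m.+1%:R * J + 1) by rewrite /eta divfK // gt_eqF.
  apply: H.
  + by rewrite ler_nat B1.
  + rewrite -natrM -natrD ler_nat; apply: leq_trans (B2 U s) _.
    rewrite -addnA leq_add2l /X mulSn; exact: leq_addr.
  + exact: ler0n.
- move=> e; rewrite Cb_card_edge dln //.
  have := finb (M := m.+1%:R) c0 (hg [set inr e]%SET) _ _ hX _ J0 eta0 (hk' [set inr e]%SET).
  move=> H; have -> : eps = eta * (m.+1%:R * J + 1) by rewrite /eta divfK // gt_eqF.
  apply: H.
  + by rewrite ler_nat B3.
  + rewrite -natrM -natrD ler_nat; apply: leq_trans (B4 U hP e) _.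
    rewrite -addnA leq_add2l /X -/m mulSn; lia.
  + exact: ler0n.
Qed.


Lemma cvg_close (u v : nat -> R) (l : R) : v @ \oo --> l ->
  (forall n, `|u n - v n| <= n.+1%:R^-1) -> u @ \oo --> l.
Proof.
move=> hv huv.
have -> : u = v + (u - v) by apply: funext => n /=; rewrite addrC subrK.
rewrite -[l]addr0; apply: cvgD => //.
apply: (@squeeze_cvgr _ _ _ _ (fun n => - harmonic n) harmonic).
- apply: nearW => n /=; rewrite -ler_norml; exact: huv.
- have := @cvgN R R nat \oo _ harmonic 0 (@cvg_harmonic R); rewrite oppr0 => h; apply: h; exact: _.
- exact: (@cvg_harmonic R).
Qed.

Lemma scale_bound (cn d ln0 lam0 : R) (n : nat) : 0 < cn ->
  `|d * ln0 - lam0| <= (n.+1%:R * cn)^-1 -> `|cn * d * ln0 - cn * lam0| <= n.+1%:R^-1.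
Proof.
move=> c0 h; rewrite -mulrA -mulrBr normrM gtr0_norm //.
apply: le_trans (ler_wpM2l (ltW c0) h) _.
by rewrite invfM mulrCA mulfV ?gt_eqF // mulr1.
Qed.

Lemma bwd_thm (lam : pS P -> R) (om : pE P -> R) :
  CL (@proj_region R P F) lam om -> zero_achievable_qlin F lam om.
Proof.
move=> [lamn [omn [c [hreg [hc [he hs]]]]]].
have H : forall n, exists Cd : qcode P F * R, [/\ is_linear_code Cd.1, decodes Cd.1, 0 < Cd.2,
   (forall s, `|Cd.2 * ln (#|SP Cd.1 (inl s)|)%:R - lamn n s| <= (n.+1%:R * c n)^-1) &
   (forall e, `|Cd.2 * ln (#|SP Cd.1 (inr e)|)%:R - omn n e| <= (n.+1%:R * c n)^-1)].
  move=> n; have [h [ha [hI [hT [hD [hl ho]]]]]] := hreg n.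
  have eps0 : 0 < (n.+1%:R * c n)^-1 by rewrite invr_gt0 mulr_gt0.
  have [C [d [h1 h2 h3 h4 h5]]] := coreB ha hI hT hD eps0.
  by exists (C, d); split => // [s|e]; rewrite ?hl ?ho.
have [Cd hCd] := choice H.
exists (fun n => (Cd n).1), (fun n => c n * (Cd n).2).
split; [|split; [|split; [|split]]].
- by move=> n; case: (hCd n).
- by move=> n; case: (hCd n).
- by move=> n; case: (hCd n) => _ _ d0 _ _; rewrite mulr_gt0.
- move=> s; have [l [hl ls]] := hs s; exists l; split => //.
  apply: (cvg_close hl) => n; case: (hCd n) => _ _ _ hS _; exact: scale_bound.
- move=> e; have [l [hl le]] := he e; exists l; split => //.
  apply: (cvg_close hl) => n; case: (hCd n) => _ _ _ _ hE; exact: scale_bound.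
Qed.

End Glue.


Unset Implicit Arguments.

(* GF(q) is represented by an arbitrary finite field F (q = #|F|, a prime power). *)
Theorem theorem4 (R : realType) (P : problem) (F : finFieldType)
  (hP : acyclic P) (lam : pS P -> R) (om : pE P -> R)
  (hlam : forall s, 0 <= lam s) (hom : forall e, 0 <= om e) :
  @zero_achievable_qlin R P F lam om <->
  @CL R P (@proj_region R P F) lam om.
Proof. split; [exact: fwd_thm | exact: bwd_thm]. Qed.
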